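(* Let $C,D$ be cones together with a non-singular bilinear map $\langle\cdot,\cdot\rangle\colon C\times D\to\overline{\mathbb{R}}_+$, and equip $D$ with the weak upper topology $w(D,C)$. Then every sublinear functional $\psi\colon D\to\overline{\mathbb{R}}_+$ which is lower semicontinuous with respect to $w(D,C)$ is the pointwise supremum of the functionals $\widehat x$ lying below it: for every $y\in D$, \[\psi(y)=\sup\{\langle x,y\rangle\mid x\in C,\ \langle x,z\rangle\le\psi(z)\text{ for all }z\in D\}.\]
   Context: $\overline{\mathbb{R}}_+=[0,+\infty)\cup\{+\infty\}$ with extended arithmetic ($r+\infty=+\infty$, $r\cdot\infty=\infty$ for $r>0$, $0\cdot\infty=0$), equipped with the upper topology, whose open sets are $\emptyset$, $\overline{\mathbb{R}}_+$ and the intervals $]r,+\infty]$, $r\in[0,\infty)$; lower semicontinuous means continuous for this topology. A cone is a commutative monoid with a scalar multiplication by $[0,\infty)$ satisfying $r(x+y)=rx+ry$, $(r+s)x=rx+sx$, $(rs)x=r(sx)$, $1x=x$, $0x=0$. A functional $\psi\colon D\to\overline{\mathbb{R}}_+$ is sublinear if $\psi(ry)=r\psi(y)$ for all $r\in[0,\infty)$ and $\psi(y+z)\le\psi(y)+\psi(z)$. A bilinear map is one additive and homogeneous in each argument separately; it is non-singular if for $y\ne y'$ in $D$ there is $x\in C$ with $\langle x,y\rangle\ne\langle x,y'\rangle$. For $x\in C$, $\widehat x(y)=\langle x,y\rangle$. The weak upper topology $w(D,C)$ is the coarsest topology on $D$ making all $\widehat x$, $x\in C$, lower semicontinuous. The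 supremum of the empty set is $0$. *)

(* Defs.v *)
From Stdlib Require Import Reals.
Open Scope R_scope.

Definition NNR := {r : R | 0 <= r}.
Definition nnval (r : NNR) : R := proj1_sig r.
Definition nn0 : NNR := exist _ 0 (Rle_refl 0).
Definition nn1 : NNR := exist _ 1 Rle_0_1.
Definition nnadd (r s : NNR) : NNR :=
  exist _ (nnval r + nnval s) (Rplus_le_le_0_compat _ _ (proj2_sig r) (proj2_sig s)).
Definition nnmul (r s : NNR) : NNR :=
  exist _ (nnval r * nnval s) (Rmult_le_pos _ _ (proj2_sig r) (proj2_sig s)).

Inductive ERp : Type := Fin (r : NNR) | Inf.

Definition eadd (a b : ERp) : ERp :=
  match a, b with Fin r, Fin s => Fin (nnadd r s) | _, _ => Inf end.

(** r * a with the convention 0 * oo = 0. *)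
Definition escale (r : NNR) (a : ERp) : ERp :=
  match a with
  | Fin s => Fin (nnmul r s)
  | Inf => if Req_EM_T (nnval r) 0 then Fin nn0 else Inf
  end.

Definition ele (a b : ERp) : Prop :=
  match a, b with
  | Fin r, Fin s => nnval r <= nnval s
  | _, Inf => True
  | Inf, Fin _ => False
  end.

Definition elt (a b : ERp) : Prop :=
  match a, b with
  | Fin r, Fin s => nnval r < nnval s
  | Fin _, Inf => True
  | Inf, _ => False
  end.

(** s is the supremum (least upper bound) of S in [0,+oo];
    in particular the supremum of the empty set is 0. *)
Definition is_sup (S : ERp -> Prop) (s : ERp) : Prop :=
  (forall t, S t -> ele t s) /\ (forall u, (forall t, S t -> ele t u) -> ele s u).

Definition upper_open (V : ERp -> Prop) : Prop :=
  (forall t, ~ V t) \/ (forall t, V t) \/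
  exists r : NNR, forall t, V t <-> elt (Fin r) t.

Inductive generated_open {X : Type} (S : (X -> Prop) -> Prop) : (X -> Prop) -> Prop :=
| go_sub U : S U -> generated_open S U
| go_full : generated_open S (fun _ => True)
| go_inter U V : generated_open S U -> generated_open S V ->
    generated_open S (fun x => U x /\ V x)
| go_union (G : (X -> Prop) -> Prop) :
    (forall U, G U -> generated_open S U) ->
    generated_open S (fun x => exists U, G U /\ U x)
| go_ext U V : generated_open S U -> (forall x, U x <-> V x) -> generated_open S V.

(** Lower semicontinuity = continuity into [0,+oo] with the upper topology. *)
Definition lsc {X : Type} (open : (X -> Prop) -> Prop) (f : X -> ERp) : Prop :=
  forall V, upper_open V -> open (fun x => V (f x)).

(** Weak upper topology w(D,C): the coarsest topology on D making every
    y |-> <x,y> (x in C) lower semicontinuous, i.e. the topology generated by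
    the preimages of upper-open sets under these maps. *)
Definition weak_upper_open {C D : Type} (pair : C -> D -> ERp) : (D -> Prop) -> Prop :=
  generated_open (fun W => exists (x : C) (V : ERp -> Prop),
                     upper_open V /\ W = (fun y => V (pair x y))).

Definition is_cone {C : Type} (zero : C) (add : C -> C -> C) (smul : NNR -> C -> C) : Prop :=
  (forall x y z, add x (add y z) = add (add x y) z) /\
  (forall x y, add x y = add y x) /\
  (forall x, add zero x = x) /\
  (forall r x y, smul r (add x y) = add (smul r x) (smul r y)) /\
  (forall r s x, smul (nnadd r s) x = add (smul r x) (smul s x)) /\
  (forall r s x, smul (nnmul r s) x = smul r (smul s x)) /\
  (forall x, smul nn1 x = x) /\
  (forall x, smul nn0 x = zero).

Definition bilinear {C D : Type} (addC : C -> C -> C) (smulC : NNR -> C -> C)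
    (addD : D -> D -> D) (smulD : NNR -> D -> D) (pair : C -> D -> ERp) : Prop :=
  (forall x x' y, pair (addC x x') y = eadd (pair x y) (pair x' y)) /\
  (forall r x y, pair (smulC r x) y = escale r (pair x y)) /\
  (forall x y y', pair x (addD y y') = eadd (pair x y) (pair x y')) /\
  (forall r x y, pair x (smulD r y) = escale r (pair x y)).

Definition nonsingular {C D : Type} (pair : C -> D -> ERp) : Prop :=
  forall y y' : D, y <> y' -> exists x : C, pair x y <> pair x y'.

Definition sublinear {D : Type} (addD : D -> D -> D) (smulD : NNR -> D -> D)
    (psi : D -> ERp) : Prop :=
  (forall r y, psi (smulD r y) = escale r (psi y)) /\
  (forall y z, ele (psi (addD y z)) (eadd (psi y) (psi z))).

(* Main.v *)
Require Import Defs.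
From Stdlib Require Import Reals Lra Psatz Classical Arith List.
Open Scope R_scope.

Fixpoint rsum (f : nat -> R) (k : nat) : R :=
  match k with O => 0 | S k => rsum f k + f k end.

Lemma rsum_ext f g k : (forall i, (i < k)%nat -> f i = g i) -> rsum f k = rsum g k.
Proof.
  induction k; simpl; intros H; [reflexivity|].
  rewrite IHk by (intros; apply H; lia). rewrite H by lia. reflexivity.
Qed.

Lemma rsum_lin f g c k : rsum (fun i => f i - c * g i) k = rsum f k - c * rsum g k.
Proof. induction k; simpl; [ring|]. rewrite IHk; ring. Qed.

Lemma rsum_scal f c k : rsum (fun i => c * f i) k = c * rsum f k.
Proof. induction k; simpl; [ring|]. rewrite IHk; ring. Qed.

Lemma rsum_delta f i k : (i < k)%nat ->
  rsum (fun j => if Nat.eqb j i then f j else 0) k = f i.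
Proof.
  induction k; intros H; [lia|]. simpl.
  destruct (Nat.eq_dec i k) as [->|Hne].
  - rewrite Nat.eqb_refl. rewrite (rsum_ext _ (fun _ => 0)).
    + clear. assert (forall m, rsum (fun _ => 0) m = 0) as Z
        by (induction m; simpl; [reflexivity| rewrite IHm; ring]). rewrite Z; ring.
    + intros j Hj. destruct (Nat.eqb_spec j k); [lia|reflexivity].
  - rewrite IHk by lia. destruct (Nat.eqb_spec k i); [lia|ring].
Qed.

Lemma two_d (P : R -> R -> Prop) :
 (forall a b a' b' c d, P a b -> P a' b' -> 0 < c -> 0 < d -> P (c*a + d*a') (c*b + d*b')) ->
 (forall t, 0 <= t <= 1 -> exists a b, P a b /\ 0 < t*a + (1-t)*b) ->
 exists a b, P a b /\ 0 < a /\ 0 < b.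
Proof.
  intros Hc Hcov. apply NNPP; intro Hno.
  assert (Hno' : forall a b, P a b -> a <= 0 \/ b <= 0).
  { intros a b Hp. destruct (Rle_or_lt a 0); [now left|].
    destruct (Rle_or_lt b 0); [now right|]. exfalso; apply Hno; eauto. }
  set (A := fun t => 0 <= t <= 1 /\ exists a b, P a b /\ 0 < b /\ 0 < t*a + (1-t)*b).
  assert (HA0 : A 0).
  { destruct (Hcov 0) as [a [b [Hp Hg]]]; [lra|]. split; [lra|].
    exists a, b; repeat split; auto; lra. }
  assert (Hb : bound A) by (exists 1; intros t [Ht _]; lra).
  destruct (completeness A Hb (ex_intro _ 0 HA0)) as [s [Hs1 Hs2]].
  assert (Hs0 : 0 <= s) by (apply Hs1; exact HA0).
  assert (Hs1' : s <= 1) by (apply Hs2; intros t [Ht _]; lra).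
  destruct (Hcov s) as [a0 [b0 [HP0 Hg0]]]; [lra|].
  destruct (Rlt_or_le 0 b0) as [Hb0|Hb0].
  - destruct (Hno' a0 b0 HP0) as [Ha0|Ha0]; [|lra].
    set (t0 := b0 / (b0 - a0)).
    assert (Ht0 : t0 * (b0 - a0) = b0) by (unfold t0; field; lra).
    assert (Hst : s < t0) by nra.
    assert (Ht01 : t0 <= 1) by nra.
    assert (HA : A ((s + t0)/2)).
    { split; [lra|]. exists a0, b0; repeat split; auto. nra. }
    specialize (Hs1 _ HA). lra.
  - assert (Ha0 : 0 < a0) by nra.
    assert (Hsp : 0 < s) by nra.
    set (t1 := - b0 / (a0 - b0)).
    assert (Ht1 : t1 * (a0 - b0) = - b0) by (unfold t1; field; lra).
    assert (Ht1s : t1 < s) by nra.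
    assert (Ht1p : 0 <= t1) by nra.
    set (s0 := (t1 + s)/2).
    assert (Hg : 0 < s0 * a0 + (1 - s0) * b0) by (unfold s0; nra).
    assert (Hex : exists t, A t /\ s0 < t).
    { apply NNPP; intro Hn. assert (s <= s0).
      { apply Hs2. intros t Ht. destruct (Rle_or_lt t s0); auto.
        exfalso; apply Hn; eauto. }
      unfold s0 in *; lra. }
    destruct Hex as [t [[Ht [a [b [HP [Hbp Hgt]]]]] Hts]].
    destruct (Hno' a b HP) as [Ha|Ha]; [|lra].
    assert (Hlt1 : t < 1) by nra.
    assert (E1 : s0 * a0 > (1 - s0) * (- b0)) by lra.
    assert (E1' : 0 <= (1 - s0) * (- b0)) by (unfold s0 in *; nra).
    assert (E2 : (1 - t) * b > t * (- a)) by lra.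
    assert (E2' : 0 <= t * (- a)) by nra.
    assert (X1 : (s0 * a0) * ((1 - t) * b) > ((1 - s0) * (- b0)) * (t * (- a))).
    { apply Rle_lt_trans with ((s0 * a0) * (t * (-a))).
      - apply Rmult_le_compat_r; lra.
      - apply Rmult_lt_compat_l; lra. }
    assert (X2 : (1 - s0) * t * (a * b0) >= s0 * (1 - t) * (a * b0)).
    { apply Rle_ge, Rmult_le_compat_r; nra. }
    assert (X3 : s0 * (1 - t) * (a0 * b - a * b0) > 0) by nra.
    assert (X4 : a0 * b - a * b0 > 0).
    { assert (0 < s0 * (1 - t)) by (unfold s0 in *; nra).
      destruct (Rle_or_lt (a0 * b - a * b0) 0); auto. nra. }
    apply Hno. exists ((a0 - b0) * a + (b - a) * a0), ((a0 - b0) * b + (b - a) * b0).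
    split; [apply Hc; auto; lra|]. split; nra.
Qed.

Lemma gordan : forall n (K : (nat -> R) -> Prop),
 (forall w w', K w -> K w' -> K (fun i => w i + w' i)) ->
 (forall c w, 0 < c -> K w -> K (fun i => c * w i)) ->
 (forall w, K w -> exists i, (i <= n)%nat /\ w i <= 0) ->
 exists l : nat -> R, (forall i, 0 <= l i) /\ rsum l (S n) = 1 /\
   forall w, K w -> rsum (fun i => l i * w i) (S n) <= 0.
Proof.
  induction n as [|n IH]; intros K Hadd Hsc Hneg.
  - exists (fun i => if Nat.eqb i 0 then 1 else 0). split; [|split].
    + intros i; destruct (Nat.eqb i 0); lra.
    + simpl. lra.
    + intros w Hw. destruct (Hneg w Hw) as [i [Hi Hwi]].
      assert (i = 0%nat) by lia; subst. simpl. lra.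
  - set (proj := fun t (w : nat -> R) i =>
           if Nat.eqb i n then t * w n + (1 - t) * w (S n) else w i).
    set (Kt := fun t w' => exists w, K w /\ forall i, w' i = proj t w i).
    destruct (classic (exists t, 0 <= t <= 1 /\
                 forall w', Kt t w' -> exists i, (i <= n)%nat /\ w' i <= 0))
      as [[t [Ht Hn]]|Hno].
    + destruct (IH (Kt t)) as [mu [Hmu0 [Hmu1 Hmu]]].
      * intros w1 w2 [v1 [Hv1 E1]] [v2 [Hv2 E2]]. exists (fun i => v1 i + v2 i).
        split; [now apply Hadd|]. intros i. rewrite E1, E2. unfold proj.
        destruct (Nat.eqb i n); ring.
      * intros c w1 Hc [v1 [Hv1 E1]]. exists (fun i => c * v1 i).
        split; [now apply Hsc|]. intros i. rewrite E1. unfold proj.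
        destruct (Nat.eqb i n); ring.
      * exact Hn.
      * exists (fun i => if Nat.ltb i n then mu i else if Nat.eqb i n then t * mu n
                   else if Nat.eqb i (S n) then (1 - t) * mu n else 0).
        split; [|split].
        -- intros i. destruct (Nat.ltb i n); [apply Hmu0|].
           specialize (Hmu0 n).
           destruct (Nat.eqb i n); [nra|]. destruct (Nat.eqb i (S n)); nra.
        -- cbn [rsum]. rewrite Nat.ltb_irrefl, Nat.eqb_refl.
           replace (Nat.ltb (S n) n) with false by (symmetry; apply Nat.ltb_ge; lia).
           replace (Nat.eqb (S n) n) with false by (symmetry; apply Nat.eqb_neq; lia).
           rewrite ?Nat.eqb_refl. cbn [rsum] in Hmu1.
           rewrite (rsum_ext _ mu n).
           ++ lra.
           ++ intros i Hi. replace (Nat.ltb i n) with true by (symmetry; apply Nat.ltb_lt; lia). reflexivity.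
        -- intros w Hw.
           assert (HK : Kt t (proj t w)) by (exists w; split; auto).
           specialize (Hmu _ HK). cbn [rsum] in Hmu |- *.
           rewrite Nat.ltb_irrefl, Nat.eqb_refl.
           replace (Nat.ltb (S n) n) with false by (symmetry; apply Nat.ltb_ge; lia).
           replace (Nat.eqb (S n) n) with false by (symmetry; apply Nat.eqb_neq; lia).
           rewrite Nat.eqb_refl.
           unfold proj in Hmu at 2. rewrite Nat.eqb_refl in Hmu.
           rewrite (rsum_ext _ (fun i => mu i * proj t w i) n).
           ++ lra.
           ++ intros i Hi. unfold proj.
              replace (Nat.ltb i n) with true by (symmetry; apply Nat.ltb_lt; lia).
              replace (Nat.eqb i n) with false by (symmetry; apply Nat.eqb_neq; lia).
              reflexivity.
    + exfalso.
      destruct (two_d (fun a b => exists w, K w /\ (forall i, (i < n)%nat -> 0 < w i)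
                        /\ w n = a /\ w (S n) = b)) as [a [b [[w [Hw [Hp [Ea Eb]]]] [Ha Hb]]]].
      * intros a b a' b' c d [w [Hw [Hp [Ea Eb]]]] [w' [Hw' [Hp' [Ea' Eb']]]] Hc Hd.
        exists (fun i => c * w i + d * w' i). split.
        -- apply Hadd; apply Hsc; auto.
        -- split; [|subst; auto]. intros i Hi. specialize (Hp i Hi); specialize (Hp' i Hi). nra.
      * intros t Ht.
        assert (H1 : ~ forall w', Kt t w' -> exists i, (i <= n)%nat /\ w' i <= 0)
          by (intro H; apply Hno; eauto).
        apply not_all_ex_not in H1. destruct H1 as [w' H1].
        apply imply_to_and in H1. destruct H1 as [[w [Hw E]] H1].
        exists (w n), (w (S n)). split.
        -- exists w; repeat split; auto. intros i Hi.
           destruct (Rlt_or_le 0 (w i)) as [|Hle]; auto. exfalso; apply H1.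
           exists i; split; [lia|]. rewrite E. unfold proj.
           replace (Nat.eqb i n) with false by (symmetry; apply Nat.eqb_neq; lia). exact Hle.
        -- destruct (Rlt_or_le 0 (t * w n + (1 - t) * w (S n))) as [|Hle]; auto.
           exfalso; apply H1. exists n; split; [lia|]. rewrite E. unfold proj.
           rewrite Nat.eqb_refl. exact Hle.
      * destruct (Hneg w Hw) as [i [Hi Hwi]].
        destruct (Nat.lt_ge_cases i n) as [Hlt|Hge].
        -- specialize (Hp i Hlt); lra.
        -- assert (i = n \/ i = S n) as [->| ->] by lia; lra.
Qed.

Definition rlec (v c : R) (e : ERp) : Prop :=
  match e with Fin s => v <= c * nnval s | Inf => True end.
Definition erle (e : ERp) (q : R) : Prop :=
  match e with Fin s => nnval s <= q | Inf => False end.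
Definition fin (e : ERp) (v : R) : Prop :=
  match e with Fin s => nnval s = v | Inf => False end.
Definition rle (v : R) (e : ERp) : Prop :=
  match e with Fin s => v <= nnval s | Inf => True end.
Definition mkabs (v : R) : NNR := exist _ (Rabs v) (Rabs_pos v).

Lemma nnpos (r : NNR) : 0 <= nnval r.
Proof. exact (proj2_sig r). Qed.

Lemma mkabs_val v : 0 <= v -> nnval (mkabs v) = v.
Proof. intros; unfold mkabs, nnval; simpl. apply Rabs_right; lra. Qed.

Lemma escale_Inf_pos r : 0 < nnval r -> escale r Inf = Inf.
Proof. intros H; simpl. destruct (Req_EM_T (nnval r) 0); [lra|reflexivity]. Qed.

Lemma fin_eadd e1 e2 v1 v2 : fin e1 v1 -> fin e2 v2 -> fin (eadd e1 e2) (v1 + v2).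
Proof. destruct e1, e2; simpl; try tauto. intros <- <-; reflexivity. Qed.

Lemma fin_escale c e v : fin e v -> fin (escale c e) (nnval c * v).
Proof. destruct e; simpl; try tauto. intros <-; reflexivity. Qed.

Lemma fin_escale0 c e : nnval c = 0 -> fin (escale c e) 0.
Proof.
  intros H. destruct e; simpl.
  - rewrite H; ring.
  - destruct (Req_EM_T (nnval c) 0); [reflexivity|lra].
Qed.

Lemma rle_eadd e1 e2 v1 v2 : rle v1 e1 -> rle v2 e2 -> rle (v1 + v2) (eadd e1 e2).
Proof. destruct e1, e2; simpl; auto. lra. Qed.

Lemma rle_escale c e v : rle v e -> rle (nnval c * v) (escale c e).
Proof.
  destruct e; simpl; intros H.
  - apply Rmult_le_compat_l; auto. apply nnpos.
  - destruct (Req_EM_T (nnval c) 0) as [E|]; simpl; auto. rewrite E; lra.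
Qed.

Lemma bump a e : elt (Fin a) e ->
  exists b : NNR, 0 < nnval b /\ nnval a < nnval b /\ elt (Fin b) e.
Proof.
  pose proof (nnpos a) as Ha.
  destruct e as [s|]; simpl; intros H.
  - assert (Hb : 0 <= (nnval a + nnval s) / 2) by lra.
    exists (exist _ _ Hb); simpl; lra.
  - assert (Hb : 0 <= nnval a + 1) by lra.
    exists (exist _ _ Hb); simpl; lra.
Qed.

Lemma elt_trans a b e : elt (Fin b) e -> nnval a < nnval b -> elt (Fin a) e.
Proof. destruct e; simpl; auto. lra. Qed.

Lemma nbhd {C D : Type} (pair : C -> D -> ERp) U :
  weak_upper_open pair U -> forall y, U y ->
  exists l : list (C * NNR),
    Forall (fun p => 0 < nnval (snd p) /\ elt (Fin (snd p)) (pair (fst p) y)) l /\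
    forall z, Forall (fun p => elt (Fin (snd p)) (pair (fst p) z)) l -> U z.
Proof.
  induction 1 as [U [x [V [HV ->]]] | | U V _ IHU _ IHV | G _ IH | U V _ IH Hext];
    intros y Hy.
  - destruct HV as [He|[Hf|[r Hr]]].
    + exfalso; exact (He _ Hy).
    + exists nil; split; auto.
    + apply Hr in Hy. destruct (bump _ _ Hy) as [b [Hb0 [Hab Hb]]].
      exists ((x, b) :: nil). split.
      * constructor; auto.
      * intros z Hz. inversion Hz; subst. apply Hr. simpl in *.
        eapply elt_trans; eauto.
  - exists nil; split; auto.
  - destruct Hy as [HyU HyV].
    destruct (IHU y HyU) as [l1 [H1 H1']]. destruct (IHV y HyV) as [l2 [H2 H2']].
    exists (l1 ++ l2). split.
    + apply Forall_app; auto.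
    + intros z Hz. apply Forall_app in Hz. destruct Hz. split; auto.
  - destruct Hy as [W [HW Wy]]. destruct (IH W HW y Wy) as [l [H1 H2]].
    exists l; split; auto. intros z Hz. exists W; auto.
  - apply Hext in Hy. destruct (IH y Hy) as [l [H1 H2]]. exists l; split; auto.
    intros z Hz; apply Hext; auto.
Qed.

Fixpoint csum {C : Type} (z : C) (add : C -> C -> C) (f : nat -> C) (k : nat) : C :=
  match k with O => z | S k => add (csum z add f k) (f k) end.

Lemma pair_csum_fin {C D : Type} (zeroC : C) addC (smulC : NNR -> C -> C)
  (pair : C -> D -> ERp) (X : nat -> C) (c V : nat -> R) z k :
  (forall x x' y, pair (addC x x') y = eadd (pair x y) (pair x' y)) ->
  (forall r x y, pair (smulC r x) y = escale r (pair x y)) ->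
  fin (pair zeroC z) 0 ->
  (forall i, (i < k)%nat -> 0 <= c i) ->
  (forall i, (i < k)%nat -> c i = 0 \/ fin (pair (X i) z) (V i)) ->
  fin (pair (csum zeroC addC (fun i => smulC (mkabs (c i)) (X i)) k) z)
      (rsum (fun i => c i * V i) k).
Proof.
  intros Hadd Hsc H0 Hc HV. induction k; simpl; auto.
  rewrite Hadd, Hsc. apply fin_eadd.
  - apply IHk; intros; [apply Hc|apply HV]; lia.
  - destruct (HV k ltac:(lia)) as [E|E].
    + rewrite E, Rmult_0_l. apply fin_escale0. rewrite mkabs_val; lra.
    + rewrite <- (mkabs_val (c k)) at 2 by (apply Hc; lia). now apply fin_escale.
Qed.

Lemma pair_csum_lb {C D : Type} (zeroC : C) addC (smulC : NNR -> C -> C)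
  (pair : C -> D -> ERp) (X : nat -> C) (c V : nat -> R) z k :
  (forall x x' y, pair (addC x x') y = eadd (pair x y) (pair x' y)) ->
  (forall r x y, pair (smulC r x) y = escale r (pair x y)) ->
  fin (pair zeroC z) 0 ->
  (forall i, (i < k)%nat -> 0 <= c i) ->
  (forall i, (i < k)%nat -> rle (V i) (pair (X i) z)) ->
  rle (rsum (fun i => c i * V i) k)
      (pair (csum zeroC addC (fun i => smulC (mkabs (c i)) (X i)) k) z).
Proof.
  intros Hadd Hsc H0 Hc HV. induction k; simpl.
  - destruct (pair zeroC z); simpl in *; auto. lra.
  - rewrite Hadd, Hsc. apply rle_eadd.
    + apply IHk; intros; [apply Hc|apply HV]; lia.
    + rewrite <- (mkabs_val (c k)) at 1 by (apply Hc; lia). apply rle_escale, HV; lia.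
Qed.

Lemma elt_escale_fin a c v : nnval a < nnval c * nnval v -> elt (Fin a) (escale c (Fin v)).
Proof. simpl; auto. Qed.

Lemma key (C D : Type) (zeroC : C) addC smulC (zeroD : D) addD smulD pair :
 is_cone zeroC addC smulC -> is_cone zeroD addD smulD ->
 bilinear addC smulC addD smulD pair ->
 forall psi, sublinear addD smulD psi -> lsc (weak_upper_open pair) psi ->
 forall y (r : NNR), elt (Fin r) (psi y) ->
 exists x, (forall z, ele (pair x z) (psi z)) /\ elt (Fin r) (pair x y).
Proof.
 intros HC HD [Pa1 [Ps1 [Pa2 Ps2]]] psi [Psc Padd] Hlsc y r Hr.
 destruct HC as [_ [_ [_ [_ [_ [_ [_ HC0]]]]]]].
 assert (Hz0 : forall z, fin (pair zeroC z) 0).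
 { intros z. rewrite <- (HC0 zeroC), Ps1. apply fin_escale0. reflexivity. }
 destruct (bump _ _ Hr) as [r' [Hr'0 [Hrr' Hr']]].
 assert (HW : weak_upper_open pair (fun z => elt (Fin r') (psi z))).
 { apply (Hlsc (fun t => elt (Fin r') t)). right; right. exists r'; tauto. }
 destruct (nbhd pair _ HW y Hr') as [L [HL HU]].
 destruct L as [|p0 l0].
 { exfalso. specialize (HU (smulD nn0 y) (Forall_nil _)). rewrite Psc in HU.
   destruct (psi y); simpl in HU.
   - lra.
   - destruct (Req_EM_T 0 0); simpl in HU; lra. }
 set (L := p0 :: l0) in *. set (n := length l0).
 set (d := (zeroC, nn1)).
 set (X := fun i => fst (nth i L d)).
 set (rho := fun i => nnval (snd (nth i L d))).
 assert (HL' : forall i, (i <= n)%nat -> 0 < rho i /\ elt (Fin (snd (nth i L d))) (pair (X i) y)).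
 { intros i Hi. apply (proj1 (Forall_nth _ _) HL). simpl; unfold n in Hi; lia. }
 assert (HU' : forall z, (forall i, (i <= n)%nat -> elt (Fin (snd (nth i L d))) (pair (X i) z)) ->
                 elt (Fin r') (psi z)).
 { intros z Hz. apply HU. apply Forall_nth. intros i d' Hi.
   rewrite nth_indep with (d' := d) by exact Hi. apply Hz. simpl in Hi; unfold n; lia. }
 set (a := fun i => nnval r' / rho i).
 assert (Ha : forall i, (i <= n)%nat -> 0 < a i)
   by (intros i Hi; unfold a; apply Rdiv_lt_0_compat; [lra | apply HL'; auto]).
 assert (Har : forall i, (i <= n)%nat -> a i * rho i = nnval r')
   by (intros i Hi; unfold a; field; specialize (HL' i Hi); lra).
 set (K := fun w : nat -> R => exists z q, 0 < q /\ erle (psi z) q /\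
            forall i, (i <= n)%nat -> rlec (w i + q) (a i) (pair (X i) z)).
 destruct (gordan n K) as [lam [Hl0 [Hl1 Hl]]].
 - intros w w' [z [q [Hq [Hpz Hw]]]] [z' [q' [Hq' [Hpz' Hw']]]].
   exists (addD z z'), (q + q'). split; [lra|]. split.
   + specialize (Padd z z').
     destruct (psi z) as [s|]; [|contradiction]; destruct (psi z') as [s'|]; [|contradiction].
     destruct (psi (addD z z')); simpl in *; lra.
   + intros i Hi. rewrite Pa2. specialize (Hw i Hi); specialize (Hw' i Hi).
     destruct (pair (X i) z), (pair (X i) z'); simpl in *; auto. nra.
 - intros c w Hc [z [q [Hq [Hpz Hw]]]].
   assert (Ec : nnval (mkabs c) = c) by (apply mkabs_val; lra).
   exists (smulD (mkabs c) z), (c * q). split; [nra|]. split.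
   + rewrite Psc. destruct (psi z) as [s|]; [|contradiction]. simpl in *. rewrite Ec. nra.
   + intros i Hi. rewrite Ps2. specialize (Hw i Hi). specialize (Ha i Hi).
     destruct (pair (X i) z) as [s|] eqn:E.
     * simpl in *. rewrite Ec. nra.
     * rewrite escale_Inf_pos by lra. exact I.
 - intros w [z [q [Hq [Hpz Hw]]]]. apply NNPP; intro Hn.
   assert (Hpos : forall i, (i <= n)%nat -> 0 < w i).
   { intros i Hi. destruct (Rlt_or_le 0 (w i)) as [|Hle]; auto. exfalso; apply Hn; eauto. }
   assert (Hs0 : 0 <= nnval r' / q) by (apply Rlt_le, Rdiv_lt_0_compat; lra).
   assert (Es : nnval (mkabs (nnval r' / q)) = nnval r' / q) by (apply mkabs_val; auto).
   assert (Hs : 0 < nnval r' / q) by (apply Rdiv_lt_0_compat; lra).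
   assert (H1 : elt (Fin r') (psi (smulD (mkabs (nnval r' / q)) z))).
   { apply HU'. intros i Hi. rewrite Ps2. specialize (Hw i Hi). specialize (Hpos i Hi).
     destruct (pair (X i) z) as [v|] eqn:E.
     - apply elt_escale_fin. simpl in Hw. rewrite Es.
       assert (Ev : nnval r' / q * nnval v - rho i = rho i / q * (a i * nnval v - q)).
       { specialize (HL' i Hi). unfold a; field; try split; lra. }
       assert (0 < rho i / q * (a i * nnval v - q)).
       { apply Rmult_lt_0_compat; [apply Rdiv_lt_0_compat; [apply HL'; auto|lra]|lra]. }
       unfold rho in *. lra.
     - rewrite escale_Inf_pos by lra. exact I. }
   rewrite Psc in H1. destruct (psi z) as [p|]; [|contradiction]. simpl in *.
   rewrite Es in H1.
   assert (nnval r' / q * nnval p <= nnval r' / q * q) by (apply Rmult_le_compat_l; lra).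
   replace (nnval r' / q * q) with (nnval r') in * by (field; lra). lra.
 - set (c := fun i => lam i * a i).
   assert (Hc0 : forall i, (i < S n)%nat -> 0 <= c i).
   { intros i Hi. unfold c. apply Rmult_le_pos; auto. apply Rlt_le, Ha; lia. }
   set (x := csum zeroC addC (fun i => smulC (mkabs (c i)) (X i)) (S n)).
   exists x. split.
   + intros z. destruct (psi z) as [p|] eqn:Ep; [|destruct (pair x z); exact I].
     set (V := fun i => match pair (X i) z with Fin s => nnval s | Inf => 0 end).
     assert (HF : forall i, (i < S n)%nat -> c i = 0 \/ fin (pair (X i) z) (V i)).
     { intros i Hi. unfold V. destruct (pair (X i) z) eqn:E; [right; reflexivity|left].
       destruct (Rle_lt_or_eq_dec 0 (lam i) (Hl0 i)) as [Hlp|Hl']; [exfalso|unfold c; rewrite <- Hl'; ring].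
       pose proof (nnpos p) as Hp.
       set (M := (nnval p + 2) / lam i).
       set (q := nnval p + 1).
       set (w := fun j => (if Nat.eqb j i then M else 0) - q).
       assert (HK : K w).
       { exists z, q. split; [unfold q; lra|]. split; [rewrite Ep; simpl; unfold q; lra|].
         intros j Hj. unfold w. destruct (Nat.eqb_spec j i) as [->|].
         - rewrite E; exact I.
         - specialize (Ha j Hj). destruct (pair (X j) z) as [v|]; simpl; auto.
           pose proof (nnpos v); nra. }
       specialize (Hl w HK).
       rewrite (rsum_ext _ (fun j => (if Nat.eqb j i then lam j * M else 0) - q * lam j)) in Hl.
       + rewrite rsum_lin, rsum_delta in Hl by lia. rewrite Hl1 in Hl.
         unfold M, q in Hl. field_simplify in Hl; lra.
       + intros j _. unfold w. destruct (Nat.eqb j i); ring. }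
     pose proof (pair_csum_fin zeroC addC smulC pair X c V z (S n) Pa1 Ps1 (Hz0 z) Hc0 HF) as Hfin.
     fold x in Hfin.
     assert (Hbd : forall e, 0 < e -> rsum (fun i => c i * V i) (S n) <= nnval p + e).
     { intros e He. set (q := nnval p + e).
       assert (HK : K (fun j => a j * V j - q)).
       { exists z, q. pose proof (nnpos p). split; [unfold q; lra|].
         split; [rewrite Ep; simpl; unfold q; lra|].
         intros j Hj. unfold V. destruct (pair (X j) z); simpl; auto. lra. }
       specialize (Hl _ HK).
       rewrite (rsum_ext _ (fun j => c j * V j - q * lam j)) in Hl.
       + rewrite rsum_lin, Hl1 in Hl. lra.
       + intros j _. unfold c; ring. }
     destruct (pair x z) as [s|]; cbn [fin ele] in Hfin |- *; [|contradiction].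
     destruct (Rle_or_lt (nnval s) (nnval p)) as [|Hgt]; auto.
     assert (He : 0 < (nnval s - nnval p)/2) by lra.
     specialize (Hbd _ He). lra.
   + assert (Hlb : rle (rsum (fun i => c i * rho i) (S n)) (pair x y)).
     { apply pair_csum_lb; auto. intros i Hi. destruct (HL' i ltac:(lia)) as [_ H].
       unfold rho. destruct (pair (X i) y); simpl in *; auto. lra. }
     rewrite (rsum_ext _ (fun i => nnval r' * lam i)), rsum_scal, Hl1 in Hlb.
     * destruct (pair x y); simpl in *; auto. lra.
     * intros i Hi. unfold c. rewrite <- (Har i) by lia. ring.
Qed.

Theorem theorem4p3
  (C D : Type) (zeroC : C) (addC : C -> C -> C) (smulC : NNR -> C -> C)
  (zeroD : D) (addD : D -> D -> D) (smulD : NNR -> D -> D)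
  (pair : C -> D -> ERp) :
  is_cone zeroC addC smulC ->
  is_cone zeroD addD smulD ->
  bilinear addC smulC addD smulD pair ->
  nonsingular pair ->
  forall psi : D -> ERp,
    sublinear addD smulD psi ->
    lsc (weak_upper_open pair) psi ->
    forall y : D,
      is_sup (fun t => exists x : C,
                 (forall z : D, ele (pair x z) (psi z)) /\ t = pair x y)
             (psi y).
Proof.
  intros HC HD HB HN psi Hsub Hlsc y. split.
  - intros t [x [Hx ->]]. apply Hx.
  - intros u Hu. destruct u as [u0|]; [|destruct (psi y); exact I].
    destruct (classic (ele (psi y) (Fin u0))) as [H|H]; auto. exfalso.
    assert (Hlt : elt (Fin u0) (psi y)).
    { destruct (psi y); simpl in *; [apply Rnot_le_lt; exact H|exact I]. }
    destruct (key C D zeroC addC smulC zeroD addD smulD pair HC HD HB psi Hsub Hlsc y u0 Hlt)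
      as [x [Hx Hxy]].
    specialize (Hu (pair x y) (ex_intro _ x (conj Hx eq_refl))).
    destruct (pair x y); simpl in *; [lra|exact Hu].
Qed.
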